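(* Let $\alpha$ be a nonzero real number. A regular curve in $\mathbb S^2$ with constant curvature, not passing through $N$, is an $\alpha$-stationary curve if and only if one of the following holds: (1) it is contained in a geodesic (great circle) passing through $N$ (this case occurs for every value of $\alpha$); (2) it is contained in a circle of radius $r\in(0,\pi)$ centered at $N$ and $\alpha=-r\cot(r)$.
   Context: $\mathbb S^2\subset\mathbb R^3$ is the unit sphere with the Euclidean inner product. It is parametrized by $\Psi(u,v)=(\sin u\cos v,\sin u\sin v,\cos u)$, and $N=(0,0,1)$. The spherical distance from $\Psi(u,v)$ to $N$ is $u\in[0,\pi]$. The circle of radius $r$ centered at $N$ is $\{\Psi(r,v)\}$. For a regular curve $\gamma(t)=\Psi(u(t),v(t))$, the unit normal is $\mathbf n=(\gamma'\times\gamma)/|\gamma'|$ and the curvature is $\kappa=\langle\gamma'',\mathbf n\rangle/|\gamma'|^2$. The energy is $$E_\alpha[\gamma]=\int_\gamma \mathsf d^\alpha ds=\int u^\alpha\sqrt{u'^2+\sin^2(u)v'^2}\,dt,$$ where $\mathsf d$ is the distance to $N$. An $\alpha$-stationary curve is a critical point of $E_\alpha$, i.e. $(u,v)$ satisfies its Euler–Lagrange equations. Throughout the paper, $\alpha\ne0$ and curves avoid $N$. *)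

(* Defs.v *)
From Stdlib Require Import Reals.
From Coquelicot Require Import Coquelicot.
Open Scope R_scope.

Definition vec3 := (R * R * R)%type.
Definition dot3 (x y : vec3) : R :=
  let '(x1, x2, x3) := x in let '(y1, y2, y3) := y in x1 * y1 + x2 * y2 + x3 * y3.
Definition cross3 (x y : vec3) : vec3 :=
  let '(x1, x2, x3) := x in let '(y1, y2, y3) := y in
  (x2 * y3 - x3 * y2, x3 * y1 - x1 * y3, x1 * y2 - x2 * y1).
Definition norm3 (x : vec3) : R := sqrt (dot3 x x).

Definition Npole : vec3 := (0, 0, 1).
Definition Psi (u v : R) : vec3 := (sin u * cos v, sin u * sin v, cos u).

Definition gamma (u v : R -> R) (t : R) : vec3 := Psi (u t) (v t).
Definition gamma1 (u v : R -> R) (t : R) : vec3 :=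
  (Derive (fun s => fst (fst (gamma u v s))) t,
   Derive (fun s => snd (fst (gamma u v s))) t,
   Derive (fun s => snd (gamma u v s)) t).
Definition gamma2 (u v : R -> R) (t : R) : vec3 :=
  (Derive (fun s => fst (fst (gamma1 u v s))) t,
   Derive (fun s => snd (fst (gamma1 u v s))) t,
   Derive (fun s => snd (gamma1 u v s)) t).

Definition unit_normal (u v : R -> R) (t : R) : vec3 :=
  let c := cross3 (gamma1 u v t) (gamma u v t) in
  let k := / norm3 (gamma1 u v t) in
  let '(c1, c2, c3) := c in (k * c1, k * c2, k * c3).
Definition curvature (u v : R -> R) (t : R) : R :=
  dot3 (gamma2 u v t) (unit_normal u v t) / (norm3 (gamma1 u v t)) ^ 2.

Definition Lag (alpha : R) (x y p q : R) : R :=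
  Rpower x alpha * sqrt (p ^ 2 + (sin x) ^ 2 * q ^ 2).

(* alpha-stationary: (u,v) satisfies the Euler-Lagrange equations of E_alpha on (a,b):
     d/dt (dL/du') = dL/du   and   d/dt (dL/dv') = dL/dv. *)
Definition stationary (alpha a b : R) (u v : R -> R) : Prop :=
  forall t, a < t < b ->
    is_derive (fun s => Derive (fun p => Lag alpha (u s) (v s) p (Derive v s)) (Derive u s)) t
              (Derive (fun x => Lag alpha x (v t) (Derive u t) (Derive v t)) (u t))
 /\ is_derive (fun s => Derive (fun q => Lag alpha (u s) (v s) (Derive u s) q) (Derive v s)) t
              (Derive (fun y => Lag alpha (u t) y (Derive u t) (Derive v t)) (v t)).

Definition on_great_circle_through_N (w : vec3) (x : vec3) : Prop :=
  w <> (0, 0, 0) /\ dot3 w Npole = 0 /\ norm3 x = 1 /\ dot3 w x = 0.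

Definition on_circle_N (r : R) (x : vec3) : Prop := exists v, x = Psi r v.

(* Main.v *)
Require Import Defs.
From Stdlib Require Import Reals.
From Coquelicot Require Import Coquelicot.
From Stdlib Require Import Nsatz Lra.
Open Scope R_scope.


Definition smooth2 (a b : R) (u : R -> R) :=
  forall t, a < t < b -> ex_derive u t /\ ex_derive (Derive u) t.

Ltac etafix := repeat match goal with |- context [Derive (fun x => ?f x) ?t] => change (Derive (fun x => f x) t) with (Derive f t) end.
Ltac adr := auto_derive; [repeat split; assumption| etafix; ring].

Lemma loc_int a b t : a < t < b -> locally t (fun s => a < s < b).
Proof.
  intros [H1 H2].
  assert (He : 0 < Rmin (t - a) (b - t)) by (apply Rmin_pos; lra).
  exists (mkposreal _ He). intros y Hy. simpl in Hy.
  unfold ball in Hy; simpl in Hy; unfold AbsRing_ball, abs, minus, plus, opp in Hy; simpl in Hy.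
  apply Rabs_def2 in Hy. destruct Hy as [Hy1 Hy2].
  pose proof (Rmin_l (t-a) (b-t)); pose proof (Rmin_r (t-a) (b-t)). lra.
Qed.

Lemma deriv_uniq (f : R -> R) (x l1 l2 : R) : is_derive f x l1 -> is_derive f x l2 -> l1 = l2.
Proof. intros H1 H2. apply is_derive_unique in H1. apply is_derive_unique in H2. congruence. Qed.

Lemma gamma1_eq a b u v t : smooth2 a b u -> smooth2 a b v -> a < t < b ->
  gamma1 u v t =
  (cos (u t) * Derive u t * cos (v t) - sin (u t) * sin (v t) * Derive v t,
   cos (u t) * Derive u t * sin (v t) + sin (u t) * cos (v t) * Derive v t,
   - sin (u t) * Derive u t).
Proof.
  intros Hu Hv Ht. destruct (Hu t Ht) as [Hu1 _]. destruct (Hv t Ht) as [Hv1 _].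
  unfold gamma1, gamma, Psi; simpl.
  f_equal; [f_equal|]; apply is_derive_unique; adr.
Qed.

Lemma gamma2_eq a b u v t : smooth2 a b u -> smooth2 a b v -> a < t < b ->
  gamma2 u v t =
  ((- sin (u t) * Derive u t * Derive u t * cos (v t) + cos (u t) * Derive (Derive u) t * cos (v t)
     - cos (u t) * Derive u t * sin (v t) * Derive v t)
   - (cos (u t) * Derive u t * sin (v t) * Derive v t + sin (u t) * cos (v t) * Derive v t * Derive v t
      + sin (u t) * sin (v t) * Derive (Derive v) t),
   (- sin (u t) * Derive u t * Derive u t * sin (v t) + cos (u t) * Derive (Derive u) t * sin (v t)
     + cos (u t) * Derive u t * cos (v t) * Derive v t)
   + (cos (u t) * Derive u t * cos (v t) * Derive v t - sin (u t) * sin (v t) * Derive v t * Derive v t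
      + sin (u t) * cos (v t) * Derive (Derive v) t),
   - (cos (u t) * Derive u t * Derive u t + sin (u t) * Derive (Derive u) t)).
Proof.
  intros Hu Hv Ht. destruct (Hu t Ht) as [Hu1 Hu2]. destruct (Hv t Ht) as [Hv1 Hv2].
  pose proof (loc_int a b t Ht) as HL.
  unfold gamma2.
  f_equal; [f_equal|]; apply is_derive_unique.
  - eapply is_derive_ext_loc.
    { eapply filter_imp; [|exact HL]. intros s Hs. rewrite (gamma1_eq a b u v s Hu Hv Hs). simpl. reflexivity. }
    adr.
  - eapply is_derive_ext_loc.
    { eapply filter_imp; [|exact HL]. intros s Hs. rewrite (gamma1_eq a b u v s Hu Hv Hs). simpl. reflexivity. }
    adr.
  - eapply is_derive_ext_loc.
    { eapply filter_imp; [|exact HL]. intros s Hs. rewrite (gamma1_eq a b u v s Hu Hv Hs). simpl. reflexivity. }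
    adr.
Qed.


Definition Qf (u v : R -> R) t := Derive u t ^ 2 + sin (u t) ^ 2 * Derive v t ^ 2.

Lemma dot_g1 a b u v t : smooth2 a b u -> smooth2 a b v -> a < t < b ->
  dot3 (gamma1 u v t) (gamma1 u v t) = Qf u v t.
Proof.
  intros Hu Hv Ht. rewrite (gamma1_eq a b u v t Hu Hv Ht). unfold Qf; simpl.
  pose proof (sin2_cos2 (u t)); pose proof (sin2_cos2 (v t)). unfold Rsqr in *.
  nsatz.
Qed.

Lemma tp (su cu sv cv u1 u2 v1 v2 : R) : su^2+cu^2 = 1 -> sv^2+cv^2=1 ->
((- su * u1 * u1 * cv +
  cu * u2 * cv -
  cu * u1 * sv * v1 -
  (cu * u1 * sv * v1 +
   su * cv * v1 * v1 +
   su * sv * v2)) *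
 ((cu * u1 * sv + su * cv * v1) *
  cu - - su * u1 * (su * sv)) +
 (- su * u1 * u1 * sv +
  cu * u2 * sv +
  cu * u1 * cv * v1 +
  (cu * u1 * cv * v1 -
   su * sv * v1 * v1 +
   su * cv * v2)) *
 (- su * u1 * (su * cv) -
  (cu * u1 * cv - su * sv * v1) *
  cu) +
 - (cu * u1 * u1 + su * u2) *
 ((cu * u1 * cv - su * sv * v1) *
  (su * sv) -
  (cu * u1 * sv + su * cv * v1) *
  (su * cv))) =
 (su * v1 * u2 -
  su ^ 2 * cu * v1 ^ 3 -
  2 * cu * u1 ^ 2 * v1 -
  su * u1 * v2).
Proof. intros H1 H2. apply Rminus_diag_uniq.
match goal with |- ?L - ?R = 0 => assert (E: L - R = (sv^2+cv^2-1)*((-2*su^2*cu*u1^2*v1) + (1*su*cu^2*u2*v1) + (-1*su^2*cu*v1^3) + (-2*cu^3*u1^2*v1) + (-1*su^3*u1*v2) + (-1*su*cu^2*u1*v2) + (1*su^3*u2*v1)) + (su^2+cu^2-1)*((1*su*u2*v1) + (-2*cu*u1^2*v1) + (-1*su*u1*v2))) by ring end.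
rewrite E, H1, H2. ring. Qed.

Lemma curv_alg (g2x g2y g2z c1 c2 c3 W N: R): W <> 0 -> g2x*c1+g2y*c2+g2z*c3 = N ->
  (g2x*(/W*c1) + g2y*(/W*c2) + g2z*(/W*c3)) / W^2 = N/W^3.
Proof. intros HW <-. field. auto. Qed.

Definition Nk (u v : R -> R) t :=
  sin (u t) * Derive v t * Derive (Derive u) t - sin (u t) ^ 2 * cos (u t) * Derive v t ^ 3
  - 2 * cos (u t) * Derive u t ^ 2 * Derive v t - sin (u t) * Derive u t * Derive (Derive v) t.

Lemma curv_eq a b u v t : smooth2 a b u -> smooth2 a b v -> a < t < b -> 0 < Qf u v t ->
  curvature u v t = Nk u v t / sqrt (Qf u v t) ^ 3.
Proof.
  intros Hu Hv Ht HQ. unfold curvature, unit_normal, norm3.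
  rewrite (dot_g1 a b u v t Hu Hv Ht).
  rewrite (gamma2_eq a b u v t Hu Hv Ht), (gamma1_eq a b u v t Hu Hv Ht).
  unfold gamma, Psi, cross3, dot3. simpl.
  apply curv_alg.
  - apply Rgt_not_eq. apply sqrt_lt_R0. exact HQ.
  - unfold Nk. apply tp.
    + rewrite <- (sin2_cos2 (u t)); unfold Rsqr; ring.
    + rewrite <- (sin2_cos2 (v t)); unfold Rsqr; ring.
Qed.


Lemma dLp alpha x y p q : 0 < p^2 + sin x^2 * q^2 ->
  Derive (fun p0 => Lag alpha x y p0 q) p = Rpower x alpha * p / sqrt (p^2 + sin x^2 * q^2).
Proof.
  intros H. apply is_derive_unique. unfold Lag. auto_derive; [exact H|].
  assert (sqrt (p^2 + sin x^2 * q^2) <> 0) by (apply Rgt_not_eq, sqrt_lt_R0, H). simpl in *. field. auto.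
Qed.

Lemma dLq alpha x y p q : 0 < p^2 + sin x^2 * q^2 ->
  Derive (fun q0 => Lag alpha x y p q0) q = Rpower x alpha * (sin x ^2 * q) / sqrt (p^2 + sin x^2 * q^2).
Proof.
  intros H. apply is_derive_unique. unfold Lag. auto_derive; [exact H|].
  assert (sqrt (p^2 + sin x^2 * q^2) <> 0) by (apply Rgt_not_eq, sqrt_lt_R0, H). simpl in *. field. auto.
Qed.

Lemma dLx alpha x y p q : 0 < x -> 0 < p^2 + sin x^2 * q^2 ->
  Derive (fun x0 => Lag alpha x0 y p q) x =
  alpha * Rpower x alpha / x * sqrt (p^2 + sin x^2 * q^2)
  + Rpower x alpha * (sin x * cos x * q^2) / sqrt (p^2 + sin x^2 * q^2).
Proof.
  intros Hx H. apply is_derive_unique. unfold Lag, Rpower. auto_derive; [tauto|].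
  assert (sqrt (p^2 + sin x^2 * q^2) <> 0) by (apply Rgt_not_eq, sqrt_lt_R0, H).
  simpl in *. field. split; auto. lra.
Qed.

Lemma dLy alpha x y p q : Derive (fun y0 => Lag alpha x y0 p q) y = 0.
Proof. unfold Lag. apply Derive_const. Qed.


Definition Wf u v t := sqrt (Qf u v t).
Definition Af alpha (u : R -> R) t := Rpower (u t) alpha.
Definition Wpf u v t := (Derive u t * Derive (Derive u) t + sin (u t) * cos (u t) * Derive u t * Derive v t ^ 2
   + sin (u t) ^ 2 * Derive v t * Derive (Derive v) t) / Wf u v t.
Definition D1f alpha u v t :=
  alpha * Af alpha u t * Derive u t ^ 2 / (u t * Wf u v t) + Af alpha u t * Derive (Derive u) t / Wf u v t
  - Af alpha u t * Derive u t * Wpf u v t / Wf u v t ^ 2.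
Definition D2f alpha u v t :=
  alpha * Af alpha u t * Derive u t * sin (u t) ^ 2 * Derive v t / (u t * Wf u v t)
  + Af alpha u t * (2 * sin (u t) * cos (u t) * Derive u t * Derive v t + sin (u t) ^ 2 * Derive (Derive v) t) / Wf u v t
  - Af alpha u t * sin (u t) ^ 2 * Derive v t * Wpf u v t / Wf u v t ^ 2.
Definition Lxf alpha u v t :=
  alpha * Af alpha u t / u t * Wf u v t + Af alpha u t * (sin (u t) * cos (u t) * Derive v t ^ 2) / Wf u v t.

Lemma D1_eq alpha a b u v t : smooth2 a b u -> smooth2 a b v ->
  (forall s, a < s < b -> 0 < u s) -> (forall s, a < s < b -> 0 < Qf u v s) -> a < t < b ->
  is_derive (fun s => Derive (fun p => Lag alpha (u s) (v s) p (Derive v s)) (Derive u s)) t (D1f alpha u v t).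
Proof.
  intros Hu Hv Hp HQ Ht. destruct (Hu t Ht) as [Hu1 Hu2]. destruct (Hv t Ht) as [Hv1 Hv2].
  pose proof (Hp t Ht) as Hpt. pose proof (HQ t Ht) as HQt.
  eapply is_derive_ext_loc.
  { eapply filter_imp; [|exact (loc_int a b t Ht)]. intros s Hs. symmetry. apply dLp. exact (HQ s Hs). }
  assert (Wf u v t <> 0) by (apply Rgt_not_eq, sqrt_lt_R0, HQt).
  unfold Rpower. auto_derive.
  { unfold Wf, Qf in *; simpl in *. repeat split; try assumption; lra. }
  etafix.
  unfold D1f, Wpf, Af, Rpower. unfold Wf, Qf in *. simpl in *. field. split; auto. lra.
Qed.

Lemma D2_eq alpha a b u v t : smooth2 a b u -> smooth2 a b v ->
  (forall s, a < s < b -> 0 < u s) -> (forall s, a < s < b -> 0 < Qf u v s) -> a < t < b ->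
  is_derive (fun s => Derive (fun q => Lag alpha (u s) (v s) (Derive u s) q) (Derive v s)) t (D2f alpha u v t).
Proof.
  intros Hu Hv Hp HQ Ht. destruct (Hu t Ht) as [Hu1 Hu2]. destruct (Hv t Ht) as [Hv1 Hv2].
  pose proof (Hp t Ht) as Hpt. pose proof (HQ t Ht) as HQt.
  eapply is_derive_ext_loc.
  { eapply filter_imp; [|exact (loc_int a b t Ht)]. intros s Hs. symmetry. apply dLq. exact (HQ s Hs). }
  assert (Wf u v t <> 0) by (apply Rgt_not_eq, sqrt_lt_R0, HQt).
  unfold Rpower. auto_derive.
  { unfold Wf, Qf in *; simpl in *. repeat split; try assumption; lra. }
  etafix.
  unfold D2f, Wpf, Af, Rpower. unfold Wf, Qf in *. simpl in *. field. split; auto. lra.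
Qed.

Lemma stat_iff alpha a b u v : smooth2 a b u -> smooth2 a b v ->
  (forall s, a < s < b -> 0 < u s) -> (forall s, a < s < b -> 0 < Qf u v s) ->
  (stationary alpha a b u v <-> forall t, a < t < b -> D1f alpha u v t = Lxf alpha u v t /\ D2f alpha u v t = 0).
Proof.
  intros Hu Hv Hp HQ. unfold stationary. split.
  - intros H t Ht. destruct (H t Ht) as [H1 H2]. split.
    + eapply deriv_uniq. apply (D1_eq alpha a b u v t Hu Hv Hp HQ Ht).
      rewrite dLx in H1; [exact H1| apply Hp; auto | apply HQ; auto].
    + eapply deriv_uniq. apply (D2_eq alpha a b u v t Hu Hv Hp HQ Ht).
      rewrite dLy in H2. exact H2.
  - intros H t Ht. destruct (H t Ht) as [H1 H2]. split.
    + rewrite dLx; [| apply Hp; auto | apply HQ; auto].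
      unfold Lxf, Af, Wf, Qf in H1. rewrite <- H1. apply (D1_eq alpha a b u v t Hu Hv Hp HQ Ht).
    + rewrite dLy, <- H2. apply (D2_eq alpha a b u v t Hu Hv Hp HQ Ht).
Qed.


Lemma case1_alg alpha u v t : Derive v t = 0 -> Derive (Derive v) t = 0 ->
  Wf u v t ^ 2 = Derive u t ^ 2 -> Wf u v t <> 0 -> u t <> 0 ->
  D1f alpha u v t = Lxf alpha u v t /\ D2f alpha u v t = 0.
Proof.
  intros H1 H2 HW HW0 Hu0. unfold D1f, D2f, Lxf, Wpf. rewrite H1, H2.
  set (W := Wf u v t) in *. set (A := Af alpha u t). set (x := u t) in *.
  set (u1 := Derive u t) in *. set (u2 := Derive (Derive u) t).
  split; [|field; auto].
  apply Rminus_diag_uniq.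
  replace (alpha * A * u1 ^ 2 / (x * W) + A * u2 / W -
   A * u1 * ((u1 * u2 + sin x * cos x * u1 * 0 ^ 2 + sin x ^ 2 * 0 * 0) / W) / W ^ 2 -
   (alpha * A / x * W + A * (sin x * cos x * 0 ^ 2) / W))
   with ((alpha * A / (x*W) - A * u2 / W^3) * (u1^2 - W^2)) by (field; auto).
  rewrite HW. ring.
Qed.

Lemma case2_alg alpha u v t : Derive u t = 0 -> Derive (Derive u) t = 0 ->
  Wf u v t ^ 2 = sin (u t) ^ 2 * Derive v t ^ 2 -> Wf u v t <> 0 -> u t <> 0 -> sin (u t) <> 0 ->
  alpha = - u t * (cos (u t) / sin (u t)) ->
  D1f alpha u v t = Lxf alpha u v t /\ D2f alpha u v t = 0.
Proof.
  intros H1 H2 HW HW0 Hu0 Hs Ha. unfold D1f, D2f, Lxf, Wpf. rewrite H1, H2.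
  set (W := Wf u v t) in *. set (A := Af alpha u t). set (x := u t) in *.
  set (v1 := Derive v t) in *. set (v2 := Derive (Derive v) t).
  split.
  - apply Rminus_diag_uniq.
    replace (alpha * A * 0 ^ 2 / (x * W) + A * 0 / W -
     A * 0 * ((0 * 0 + sin x * cos x * 0 * v1 ^ 2 + sin x ^ 2 * v1 * v2) / W) / W ^ 2 -
     (alpha * A / x * W + A * (sin x * cos x * v1 ^ 2) / W))
     with (- A / (x * W) * (alpha * W^2 + x * sin x * cos x * v1^2)) by (field; auto).
    rewrite HW, Ha. field. auto.
  - replace (alpha * A * 0 * sin x ^ 2 * v1 / (x * W) +
     A * (2 * sin x * cos x * 0 * v1 + sin x ^ 2 * v2) / W -
     A * sin x ^ 2 * v1 * ((0 * 0 + sin x * cos x * 0 * v1 ^ 2 + sin x ^ 2 * v1 * v2) / W) / W ^ 2)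
     with (A * sin x ^2 * v2 / W^3 * (W^2 - sin x ^ 2 * v1^2)) by (field; auto).
    rewrite HW. ring.
Qed.

Lemma key_alg alpha u v t : D1f alpha u v t = Lxf alpha u v t -> D2f alpha u v t = 0 ->
  Wf u v t <> 0 -> u t <> 0 -> sin (u t) <> 0 -> Af alpha u t <> 0 ->
  Nk u v t = alpha * sin (u t) * Derive v t * Wf u v t ^ 2 / u t.
Proof.
  intros E1 E2 HW Hu0 Hs HA.
  assert (K : Af alpha u t / Wf u v t * (Nk u v t - alpha * sin (u t) * Derive v t * Wf u v t ^ 2 / u t)
     = sin (u t) * Derive v t * (D1f alpha u v t - Lxf alpha u v t) - Derive u t / sin (u t) * D2f alpha u v t).
  { unfold D1f, D2f, Lxf, Wpf, Nk. field. auto. }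
  rewrite E1, E2 in K. replace (sin (u t) * Derive v t * (Lxf alpha u v t - Lxf alpha u v t) - Derive u t / sin (u t) * 0) with 0 in K by ring.
  apply Rmult_integral in K. destruct K as [K|K].
  - exfalso. unfold Rdiv in K. apply Rmult_integral in K. destruct K as [K|K]; [auto|].
    apply Rinv_neq_0_compat in HW. auto.
  - lra.
Qed.


Lemma const_on (f : R -> R) a b : (forall t, a < t < b -> is_derive f t 0) ->
  forall t1 t2, a < t1 < b -> a < t2 < b -> f t1 = f t2.
Proof.
  intros H t1 t2 H1 H2.
  destruct (MVT_gen f t1 t2 (fun _ => 0)) as [c [Hc E]].
  - intros x Hx. apply H. pose proof (Rmin_l t1 t2). pose proof (Rmin_r t1 t2).
    pose proof (Rmax_l t1 t2). pose proof (Rmax_r t1 t2).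
    destruct (Rle_dec t1 t2).
    + rewrite Rmin_left in Hx by lra. rewrite Rmax_right in Hx by lra. lra.
    + rewrite Rmin_right in Hx by lra. rewrite Rmax_left in Hx by lra. lra.
  - intros x Hx. 
    assert (Hx' : a < x < b).
    { destruct (Rle_dec t1 t2).
      + rewrite Rmin_left in Hx by lra. rewrite Rmax_right in Hx by lra. lra.
      + rewrite Rmin_right in Hx by lra. rewrite Rmax_left in Hx by lra. lra. }
    apply derivable_continuous_pt. exists 0. apply is_derive_Reals. apply H. exact Hx'.
  - lra.
Qed.

Lemma loc_nonzero (f : R -> R) x : continuous f x -> f x <> 0 -> locally x (fun y => f y <> 0).
Proof.
  intros Hc Hf. apply (Hc (fun y => y <> 0)).
  assert (He : 0 < Rabs (f x)) by (apply Rabs_pos_lt; auto).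
  exists (mkposreal _ He). intros y Hy. simpl in Hy.
  unfold ball in Hy; simpl in Hy; unfold AbsRing_ball, abs, minus, plus, opp in Hy; simpl in Hy.
  intros ->. rewrite Rplus_0_l, Rabs_Ropp in Hy. lra.
Qed.

Lemma deriv_loc_const (f : R -> R) a b t c : (forall s, a < s < b -> f s = c) -> a < t < b -> is_derive f t 0.
Proof.
  intros H Ht. assert (Dc : is_derive (fun _ : R => c) t 0) by (auto_derive; try reflexivity; try ring).
  eapply is_derive_ext_loc; [| exact Dc].
  eapply filter_imp; [|exact (loc_int a b t Ht)]. intros s Hs. simpl. rewrite H; auto.
Qed.

Lemma propag a b u (F F' : R -> R) : smooth2 a b u -> (forall x, is_derive F x (F' x)) ->
  (forall t, a < t < b -> Derive u t * F (u t) = 0) ->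
  forall t, a < t < b -> Derive u t * F' (u t) = 0.
Proof.
  intros Hu HF H t Ht. destruct (Hu t Ht) as [Hu1 Hu2].
  destruct (Req_dec (Derive u t) 0) as [E|E]; [rewrite E; ring|].
  assert (HL : locally t (fun s => a < s < b /\ Derive u s <> 0)).
  { apply filter_and. apply loc_int; auto. apply loc_nonzero; auto. exact (@ex_derive_continuous R_AbsRing R_NormedModule (Derive u) t Hu2). }
  assert (D0 : is_derive (fun s => F (u s)) t 0).
  { assert (Dc : is_derive (fun _ : R => 0) t 0) by (auto_derive; try reflexivity; try ring).
  eapply is_derive_ext_loc; [| exact Dc].
    eapply filter_imp; [|exact HL]. intros s [Hs Hn]. simpl.
    specialize (H s Hs). apply Rmult_integral in H. destruct H; [contradiction|auto]. }
  assert (D1 : is_derive (fun s => F (u s)) t (Derive u t * F' (u t))).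
  { apply (is_derive_comp F u t (F' (u t)) (Derive u t)). apply HF. apply Derive_correct. exact Hu1. }
  pose proof (deriv_uniq _ _ _ _ D1 D0). exact H0.
Qed.


Lemma Psi_norm x y : dot3 (Psi x y) (Psi x y) = 1.
Proof.
  unfold Psi, dot3. pose proof (sin2_cos2 x); pose proof (sin2_cos2 y). unfold Rsqr in *. nsatz.
Qed.

Lemma W2 u v t : 0 <= Qf u v t -> Wf u v t ^ 2 = Qf u v t.
Proof. intros H. unfold Wf. simpl. rewrite Rmult_1_r. apply sqrt_sqrt. exact H. Qed.

Lemma case2_rev_alg alpha u v t : Derive u t = 0 -> Derive (Derive u) t = 0 ->
  Wf u v t ^ 2 = sin (u t) ^ 2 * Derive v t ^ 2 -> Wf u v t <> 0 -> u t <> 0 -> sin (u t) <> 0 ->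
  Af alpha u t <> 0 -> Derive v t <> 0 -> D1f alpha u v t = Lxf alpha u v t ->
  alpha = - u t * (cos (u t) / sin (u t)).
Proof.
  intros H1 H2 HW HW0 Hu0 Hs HA Hv E.
  assert (K : D1f alpha u v t - Lxf alpha u v t = - Af alpha u t / (u t * Wf u v t) *
     (alpha * Wf u v t ^ 2 + u t * sin (u t) * cos (u t) * Derive v t ^ 2)).
  { unfold D1f, Lxf, Wpf. rewrite H1, H2. field. auto. }
  rewrite E, Rminus_diag_eq in K by reflexivity. symmetry in K.
  apply Rmult_integral in K. destruct K as [K|K].
  - exfalso. unfold Rdiv in K. apply Rmult_integral in K. destruct K as [K|K].
    + apply HA. lra.
    + revert K. apply Rinv_neq_0_compat. apply Rmult_integral_contrapositive_currified; auto.
  - rewrite HW in K.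
    assert (Z : sin (u t) * Derive v t ^ 2 * (alpha * sin (u t) + u t * cos (u t)) = 0) by (rewrite <- K; ring).
    apply Rmult_integral in Z. destruct Z as [Z|Z].
    + exfalso. apply Rmult_integral in Z. destruct Z as [Z|Z]; [auto|]. apply Hv. simpl in Z. nra.
    + replace alpha with ((alpha * sin (u t) + u t * cos (u t)) / sin (u t) - u t * cos (u t) / sin (u t)) by (field; auto).
      rewrite Z. field. auto.
Qed.

Definition hf alpha x := (1 + alpha) * sin x + x * cos x.
Definition hf1 alpha x := (2 + alpha) * cos x - x * sin x.
Definition hf2 alpha x := - (3 + alpha) * sin x - x * cos x.

Theorem proposition3p3 (alpha : R) (Halpha : alpha <> 0)
  (a b : R) (Hab : a < b) (u v : R -> R)
  (Hsmooth : forall (n : nat) (t : R), a < t < b -> ex_derive_n u n t /\ ex_derive_n v n t)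
  (Hu : forall t, a < t < b -> 0 < u t < PI)
  (Hreg : forall t, a < t < b -> gamma1 u v t <> (0, 0, 0))
  (Hconst : exists c, forall t, a < t < b -> curvature u v t = c) :
  stationary alpha a b u v <->
  ((exists w : vec3, forall t, a < t < b -> on_great_circle_through_N w (gamma u v t))
   \/ (exists r, 0 < r < PI /\ (forall t, a < t < b -> on_circle_N r (gamma u v t))
                 /\ alpha = - r * (cos r / sin r))).
Proof.
  assert (Hu2 : smooth2 a b u).
  { intros t Ht. destruct (Hsmooth 1%nat t Ht) as [A1 _]. destruct (Hsmooth 2%nat t Ht) as [A2 _]. split; [exact A1|exact A2]. }
  assert (Hv2 : smooth2 a b v).
  { intros t Ht. destruct (Hsmooth 1%nat t Ht) as [_ A1]. destruct (Hsmooth 2%nat t Ht) as [_ A2]. split; [exact A1|exact A2]. }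
  assert (Hp : forall s, a < s < b -> 0 < u s) by (intros s Hs; apply Hu; auto).
  assert (HQ : forall s, a < s < b -> 0 < Qf u v s).
  { intros s Hs. rewrite <- (dot_g1 a b u v s Hu2 Hv2 Hs). specialize (Hreg s Hs).
    destruct (gamma1 u v s) as [[x1 x2] x3]. simpl.
    assert (x1 * x1 + x2 * x2 + x3 * x3 <> 0).
    { intro E. apply Hreg. assert (x1 = 0) by nra. assert (x2 = 0) by nra. assert (x3 = 0) by nra. subst. reflexivity. }
    nra. }
  assert (HW : forall s, a < s < b -> Wf u v s <> 0) by (intros s Hs; apply Rgt_not_eq, sqrt_lt_R0, HQ, Hs).
  assert (HW2 : forall s, a < s < b -> Wf u v s ^ 2 = Qf u v s) by (intros s Hs; apply W2; left; apply HQ, Hs).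
  assert (Hsin : forall s, a < s < b -> 0 < sin (u s)) by (intros s Hs; apply sin_gt_0; apply Hu; auto).
  assert (HA : forall s, a < s < b -> 0 < Af alpha u s) by (intros s Hs; unfold Af, Rpower; apply exp_pos).
  set (m := (a + b) / 2). assert (Hm : a < m < b) by (unfold m; lra).
  rewrite (stat_iff alpha a b u v Hu2 Hv2 Hp HQ). split.
  -
    intros HS. destruct Hconst as [c0 Hc0].
    assert (Nkeq : forall t, a < t < b -> Nk u v t = alpha * sin (u t) * Derive v t * Wf u v t ^ 2 / u t).
    { intros t Ht. destruct (HS t Ht) as [E1 E2]. apply key_alg; auto.
      - apply Rgt_not_eq, Hp, Ht.
      - apply Rgt_not_eq, Hsin, Ht.
      - apply Rgt_not_eq, HA, Ht. }
    assert (curv : forall t, a < t < b -> c0 * (u t * Wf u v t) = alpha * sin (u t) * Derive v t).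
    { intros t Ht. rewrite <- (Hc0 t Ht), (curv_eq a b u v t Hu2 Hv2 Ht (HQ t Ht)), Nkeq by exact Ht.
      fold (Wf u v t). pose proof (HW t Ht). pose proof (Hp t Ht). field. split; auto. lra. }
    destruct (Req_dec c0 0) as [Hc|Hc].
    +
      assert (Hv1 : forall t, a < t < b -> Derive v t = 0).
      { intros t Ht. specialize (curv t Ht). rewrite Hc, Rmult_0_l in curv. symmetry in curv.
        apply Rmult_integral in curv. destruct curv as [K|K]; [|exact K].
        apply Rmult_integral in K. destruct K as [K|K]; [contradiction|]. pose proof (Hsin t Ht). lra. }
      assert (Hvc : forall t, a < t < b -> v t = v m).
      { intros t Ht. apply (const_on v a b); auto. intros s Hs. rewrite <- (Hv1 s Hs).
        apply Derive_correct. apply Hv2, Hs. }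
      left. exists (- sin (v m), cos (v m), 0). intros t Ht. unfold on_great_circle_through_N.
      split; [|split; [|split]].
      * intro E. injection E. intros E2 E3. pose proof (sin2_cos2 (v m)). unfold Rsqr in *. nra.
      * unfold dot3, Npole. ring.
      * unfold norm3, gamma. rewrite Psi_norm. apply sqrt_1.
      * unfold gamma, Psi, dot3. rewrite (Hvc t Ht). ring.
    +
      assert (Lq_eq : forall s, a < s < b ->
        Derive (fun q => Lag alpha (u s) (v s) (Derive u s) q) (Derive v s) =
        c0 / alpha * (u s * exp (alpha * ln (u s)) * sin (u s))).
      { intros s Hs. rewrite dLq by (apply HQ, Hs).
        pose proof (curv s Hs) as C. pose proof (HW s Hs) as W0. pose proof (Hp s Hs).
        unfold Wf, Qf in *. unfold Rpower.
        transitivity (c0 * (u s * sqrt (Derive u s ^ 2 + sin (u s) ^ 2 * Derive v s ^ 2)) / alpha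
           * exp (alpha * ln (u s)) * sin (u s) / sqrt (Derive u s ^ 2 + sin (u s) ^ 2 * Derive v s ^ 2)).
        - rewrite C. field. auto.
        - field. auto. }
      assert (Hh : forall t, a < t < b -> Derive u t * hf alpha (u t) = 0).
      { intros t Ht. destruct (HS t Ht) as [_ E2].
        pose proof (D2_eq alpha a b u v t Hu2 Hv2 Hp HQ Ht) as D. rewrite E2 in D.
        assert (D' : is_derive (fun s => c0 / alpha * (u s * exp (alpha * ln (u s)) * sin (u s))) t 0).
        { eapply is_derive_ext_loc; [|exact D].
          eapply filter_imp; [|exact (loc_int a b t Ht)]. intros s Hs. apply Lq_eq, Hs. }
        assert (D'' : is_derive (fun s => c0 / alpha * (u s * exp (alpha * ln (u s)) * sin (u s))) t
                 (c0 / alpha * exp (alpha * ln (u t)) * (Derive u t * hf alpha (u t)))).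
        { pose proof (Hp t Ht). destruct (Hu2 t Ht) as [U1 _].
          auto_derive. { repeat split; auto. } etafix. unfold hf. field. split; auto. lra. }
        pose proof (deriv_uniq _ _ _ _ D'' D') as Z.
        apply Rmult_integral in Z. destruct Z as [Z|Z]; [|exact Z].
        exfalso. apply Rmult_integral in Z. destruct Z as [Z|Z].
        - unfold Rdiv in Z. apply Rmult_integral in Z. destruct Z as [Z|Z]; [auto|].
          revert Z. apply Rinv_neq_0_compat. auto.
        - pose proof (exp_pos (alpha * ln (u t))). lra. }
      assert (Hh1 : forall t, a < t < b -> Derive u t * hf1 alpha (u t) = 0).
      { apply (propag a b u (hf alpha)); auto. intros x. unfold hf, hf1. auto_derive; auto. ring. }
      assert (Hh2 : forall t, a < t < b -> Derive u t * hf2 alpha (u t) = 0).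
      { apply (propag a b u (hf1 alpha)); auto. intros x. unfold hf1, hf2. auto_derive; auto. ring. }
      assert (Hu1 : forall t, a < t < b -> Derive u t = 0).
      { intros t Ht. pose proof (Hh t Ht). pose proof (Hh2 t Ht). pose proof (Hsin t Ht).
        unfold hf, hf2 in *.
        assert (Derive u t * sin (u t) = 0) by nra.
        apply Rmult_integral in H2. destruct H2; [auto|lra]. }
      assert (Huc : forall t, a < t < b -> u t = u m).
      { intros t Ht. apply (const_on u a b); auto. intros s Hs. rewrite <- (Hu1 s Hs).
        apply Derive_correct. apply Hu2, Hs. }
      right. exists (u m). split; [apply Hu, Hm|]. split.
      * intros t Ht. exists (v t). unfold gamma. rewrite (Huc t Ht). reflexivity.
      * destruct (HS m Hm) as [E1 _]. apply (case2_rev_alg alpha u v m); auto.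
        -- apply is_derive_unique. apply (deriv_loc_const (Derive u) a b m 0); auto.
        -- rewrite HW2 by exact Hm. unfold Qf. rewrite Hu1 by exact Hm. ring.
        -- apply Rgt_not_eq, Hp, Hm.
        -- apply Rgt_not_eq, Hsin, Hm.
        -- apply Rgt_not_eq, HA, Hm.
        -- intro Z. pose proof (HQ m Hm) as Q. unfold Qf in Q. rewrite Hu1, Z in Q by exact Hm. lra.
  -
    intros [[w Hw] | [r [Hr [Hc Ha]]]] t Ht.
    + destruct w as [[w1 w2] w3].
      destruct (Hw m Hm) as [Hw0 [HwN _]]. unfold dot3, Npole in HwN.
      assert (Hw3 : w3 = 0) by lra. subst w3.
      assert (Hphi : forall s, a < s < b -> w1 * cos (v s) + w2 * sin (v s) = 0).
      { intros s Hs. destruct (Hw s Hs) as [_ [_ [_ D]]]. unfold dot3, gamma, Psi in D.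
        pose proof (Hsin s Hs).
        assert (sin (u s) * (w1 * cos (v s) + w2 * sin (v s)) = 0) by lra.
        apply Rmult_integral in H0. destruct H0; [lra|auto]. }
      assert (Hv1 : forall s, a < s < b -> Derive v s = 0).
      { intros s Hs. destruct (Hv2 s Hs) as [V1 _].
        pose proof (deriv_loc_const (fun s => w1 * cos (v s) + w2 * sin (v s)) a b s 0 Hphi Hs) as D0.
        assert (D1 : is_derive (fun s => w1 * cos (v s) + w2 * sin (v s)) s
                    ((- w1 * sin (v s) + w2 * cos (v s)) * Derive v s)).
        { auto_derive; auto. etafix. ring. }
        pose proof (deriv_uniq _ _ _ _ D1 D0) as Z.
        apply Rmult_integral in Z. destruct Z as [Z|Z]; [|exact Z].
        exfalso. apply Hw0. pose proof (Hphi s Hs). pose proof (sin2_cos2 (v s)). unfold Rsqr in *.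
        assert (w1 = 0) by nra. assert (w2 = 0) by nra. subst. reflexivity. }
      apply case1_alg.
      * auto.
      * apply is_derive_unique. apply (deriv_loc_const (Derive v) a b t 0); auto.
      * rewrite HW2 by exact Ht. unfold Qf. rewrite Hv1 by exact Ht. ring.
      * auto.
      * apply Rgt_not_eq, Hp, Ht.
    + assert (Hur : forall s, a < s < b -> u s = r).
      { intros s Hs. destruct (Hc s Hs) as [v' E]. unfold gamma, Psi in E. injection E. intros E3 _ _.
        pose proof (Hu s Hs). apply cos_inj; lra. }
      assert (Hu1 : forall s, a < s < b -> Derive u s = 0).
      { intros s Hs. apply is_derive_unique. apply (deriv_loc_const u a b s r); auto. }
      apply case2_alg.
      * auto.
      * apply is_derive_unique. apply (deriv_loc_const (Derive u) a b t 0); auto.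
      * rewrite HW2 by exact Ht. unfold Qf. rewrite Hu1 by exact Ht. ring.
      * auto.
      * apply Rgt_not_eq, Hp, Ht.
      * apply Rgt_not_eq, Hsin, Ht.
      * rewrite Hur by exact Ht. exact Ha.
Qed.
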